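(* Let $0<\alpha<1$ and let $n$ be a positive integer. Assume the following induction hypothesis: for every integer $m$ with $1 \le m < n$, every digraph on $m$ vertices with minimum outdegree at least $\alpha m$ contains a directed cycle of length at most $4$. Let $G$ be a digraph on $n$ vertices such that: - every vertex of $G$ has outdegree exactly $r=\lceil \alpha n\rceil$; - $G$ contains no directed cycle of length at most $4$. Then for every arc $(u,v)\in E(G)$, $$n > r + \deg^-(v) + q(u,v) + (1-\alpha) r + (1-\alpha)^2\, t(u,v).$$
   Context: Digraphs have no loops and no parallel arcs; the arcs $(u,v)$ and $(v,u)$ together count as a directed cycle of length $2$. For a vertex $v$, define - $N^+(v)=\{u:(v,u)\in E(G)\}$; - $N^-(v)=\{u:(u,v)\in E(G)\}$; - $\deg^-(v)=|N^-(v)|$. For an arc $(u,v)\in E(G)$, define - $q(u,v)=|N^-(u)\setminus N^-(v)|$; - $t(u,v)=|N^+(u)\cap N^+(v)|$, the number of transitive triangles with base $(u,v)$. *)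

(* Defs.v *)
From mathcomp Require Import all_boot.
From Stdlib Require Import Reals ZArith.
Set Implicit Arguments. Unset Strict Implicit. Unset Printing Implicit Defensive.

(* A digraph on vertex type T is a relation e : rel T (no parallel arcs by
   construction); "no loops" is the hypothesis irreflexive e. *)
Section Digraph.
Variable T : finType.
Variable e : rel T.

Definition Nout (v : T) : {set T} := [set u | e v u].
Definition Nin  (v : T) : {set T} := [set u | e u v].
Definition outdeg (v : T) : nat := #|Nout v|.
Definition indeg (v : T) : nat := #|Nin v|.
Definition qarc (u v : T) : nat := #|Nin u :\: Nin v|.
Definition tarc (u v : T) : nat := #|Nout u :&: Nout v|.

Definition has_short_cycle : Prop :=
  (exists a b : T, a != b /\ e a b /\ e b a) \/
  (exists a b c : T, [/\ uniq [:: a; b; c], e a b, e b c & e c a]) \/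
  (exists a b c d : T,
      [/\ uniq [:: a; b; c; d], e a b, e b c, e c d & e d a]).
End Digraph.

(* ceiling of a real number, as a natural number (for nonnegative x) *)
Definition ceil_nat (x : R) : nat := Z.to_nat (- Int_part (- x)).

(* Main.v *)
Require Import Defs.
From mathcomp Require Import all_boot.
From Stdlib Require Import Reals Lra Lia Classical.
From mathcomp Require Import zify.

Lemma cardU_disj (T : finType) (A B : {set T}) :
  (forall x, x \in B -> x \notin A) -> #|A :|: B| = #|A| + #|B|.
Proof.
move=> H; rewrite cardsU; suff -> : #|A :&: B| = 0 by rewrite subn0.
apply/eqP; rewrite cards_eq0; apply/eqP/setP => x; rewrite !inE.
case: (boolP (x \in B)) => xB; last by rewrite andbF.
by rewrite (negbTE (H x xB)).
Qed.

Lemma card_lt_n (n : nat) (S : {set 'I_n}) (v : 'I_n) : v \notin S -> #|S| < n.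
Proof.
move=> vS. have : #|S| <= #|[set~ v]|.
  apply: subset_leq_card; apply/subsetP => x xS; rewrite !inE.
  by apply/eqP => exv; move: vS; rewrite -exv xS.
rewrite cardsC1 card_ord. by case: n v S vS => [[]//|n].
Qed.

Lemma induced_lemma (alpha : R) (n : nat)
  (IH : forall m : nat, (1 <= m)%N -> (m < n)%N ->
        forall e : rel 'I_m, irreflexive e ->
        (forall v : 'I_m, (alpha * INR m <= INR (outdeg e v))%R) ->
        has_short_cycle e)
  (G : rel 'I_n) (HGloop : irreflexive G)
  (Hnocyc : ~ has_short_cycle G) (S : {set 'I_n}) :
  0 < #|S| -> #|S| < n ->
  exists2 w, w \in S & (INR #|Nout G w :&: S| < alpha * INR #|S|)%R.
Proof.
move=> h1 h2.
apply: NNPP => Hn.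
pose f := @enum_val _ (mem S).
pose e' : rel 'I_#|S| := fun i j => G (f i) (f j).
have finj : injective f by apply: enum_val_inj.
apply: Hnocyc.
have Hc : has_short_cycle e'.
  apply: (IH #|S| h1 h2 e').
  - by move=> i; rewrite /e' HGloop.
  - move=> i.
    have -> : outdeg e' i = #|Nout G (f i) :&: S|.
      have E : [set f x | x in Nout e' i] = Nout G (f i) :&: S.
      apply/setP => x; rewrite !inE; apply/imsetP/andP.
      + by move=> [j]; rewrite !inE => hj ->; split => //; apply: enum_valP.
      + move=> [hx xS]; exists (enum_rank_in xS x); last by rewrite /f enum_rankK_in.
        by rewrite !inE /e' /f enum_rankK_in.
      by rewrite -E card_imset.
    apply: Rnot_lt_le => hl; apply: Hn; exists (f i) => //; apply: enum_valP.
case: Hc => [[a [b [ab [h h']]]]|[[a [b [c [hu h1' h2' h3']]]]|[a [b [c [d [hu h1' h2' h3' h4']]]]]]].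
- left; exists (f a), (f b); split; last by [].
  by rewrite (inj_eq finj).
- right; left; exists (f a), (f b), (f c); split => //.
  by have := map_inj_uniq finj [:: a; b; c]; rewrite /= => ->.
- right; right; exists (f a), (f b), (f c), (f d); split => //.
  by have := map_inj_uniq finj [:: a; b; c; d]; rewrite /= => ->.
Qed.

Section Cyc.
Variable n : nat.
Variable G : rel 'I_n.
Hypothesis HGloop : irreflexive G.
Hypothesis Hnocyc : ~ has_short_cycle G.

Lemma neq_arc {a b} : G a b -> a != b.
Proof. by move=> h; apply/eqP => e; move: h; rewrite e HGloop. Qed.

Lemma no2 a b : G a b -> G b a -> False.
Proof. move=> h1 h2; apply: Hnocyc; left; exists a, b; split => //; exact: neq_arc. Qed.

Lemma no3 a b c : G a b -> G b c -> G c a -> False.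
Proof.
move=> h1 h2 h3; apply: Hnocyc; right; left; exists a, b, c; split => //.
rewrite /= !inE negb_or (neq_arc h1) (neq_arc h2) /=.
by rewrite eq_sym (neq_arc h3).
Qed.

Lemma no4 a b c d : G a b -> G b c -> G c d -> G d a -> False.
Proof.
move=> h1 h2 h3 h4; apply: Hnocyc; right; right; exists a, b, c, d; split => //.
have ac : a != c by apply/eqP => e; subst c; exact: (no2 _ _ h1 h2).
have bd : b != d by apply/eqP => e; subst d; exact: (no2 _ _ h2 h3).
rewrite /= !inE !negb_or (neq_arc h1) (neq_arc h2) (neq_arc h3) ac bd /=.
by rewrite eq_sym (neq_arc h4).
Qed.
End Cyc.
Arguments no2 {n G}.
Arguments no3 {n G}.
Arguments no4 {n G}.


Theorem mainTheorem2 (alpha : R) (n : nat)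
  (Halpha : (0 < alpha < 1)%R) (Hn : (0 < n)%N)
  (IH : forall m : nat, (1 <= m)%N -> (m < n)%N ->
        forall e : rel 'I_m, irreflexive e ->
        (forall v : 'I_m, (alpha * INR m <= INR (outdeg e v))%R) ->
        has_short_cycle e)
  (G : rel 'I_n) (HGloop : irreflexive G)
  (Hdeg : forall v : 'I_n, outdeg G v = ceil_nat (alpha * INR n))
  (Hnocyc : ~ has_short_cycle G) :
  forall u v : 'I_n, G u v ->
    let r := INR (ceil_nat (alpha * INR n)) in
    (INR n > r + INR (indeg G v) + INR (qarc G u v) + (1 - alpha) * r
             + (1 - alpha) ^ 2 * INR (tarc G u v))%R.
Proof.
move=> u v huv r; rewrite /r; clear r.
set r0 := ceil_nat (alpha * INR n) in Hdeg *.
have n2 := no2 HGloop Hnocyc; have n3 := no3 HGloop Hnocyc; have n4 := no4 HGloop Hnocyc.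
set X := Nout G v.
have hX : #|X| = r0 by apply: Hdeg.
have vX : v \notin X by rewrite inE HGloop.
have r0pos : 0 < r0.
  rewrite -(Hdeg u) /outdeg; apply/card_gt0P; exists v; by rewrite inE.
set T := Nout G u :&: X.
have hT : tarc G u v = #|T| by [].
have TX : T \subset X by apply: subsetIr.
have [Z [Z1 Z2 Z3]] : exists Z : {set 'I_n},
   [/\ forall z, z \in Z -> z \notin X,
       forall z, z \in Z -> exists y, [/\ G u y, G v y & G y z] &
       ((1 - alpha) * INR (tarc G u v) <= INR #|Z|)%R].
  case: (posnP #|T|) => t0.
    exists set0; split.
    - by move=> z; rewrite inE.
    - by move=> z; rewrite inE.
    - by rewrite hT t0 cards0 /=; lra.
  have vT : v \notin T by rewrite inE (negbTE vX) andbF.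
  have [y yT hy] := @induced_lemma alpha n IH G HGloop Hnocyc T t0 ((@card_lt_n n T v vT)).
  exists (Nout G y :\: X); split.
  - by move=> z; rewrite inE => /andP[].
  - move=> z; rewrite !inE => /andP[_ hz]; exists y.
    by move: yT; rewrite !inE => /andP[-> ->].
  - have e1 := cardsID X (Nout G y).
    have e2 : #|Nout G y| = r0 by apply: Hdeg.
    have e3 : #|Nout G y :&: X| <= #|Nout G y :&: T| + #|X :\: T|.
      apply: leq_trans (leq_card_setU _ _).
      apply: subset_leq_card; apply/subsetP => x; rewrite !inE.
      by case: (G y x); case: (G v x); case: (G u x).
    have e4 := cardsID T X.
    have e5 : X :&: T = T by apply/setIidPr.
    rewrite e5 in e4.
    have e6 : (#|T| <= #|Nout G y :\: X| + #|Nout G y :&: T|)%N by lia.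
    move/leP in e6; apply le_INR in e6; rewrite plus_INR in e6.
    rewrite hT; clear -hy e6 Halpha; move: hy e6.
    set a := INR #|T|; set b := INR #|Nout G y :&: T|; set c := INR #|Nout G y :\: X|. move=> *; lra.
set H := X :|: Z.
have hH : #|H| = r0 + #|Z| by rewrite cardU_disj ?hX // => x; apply: Z1.
have vH : v \notin H.
  rewrite inE (negbTE vX) /=; apply/negP => /Z2 [y [_ h1 h2]]; exact: n2 _ _ h1 h2.
have [w wH hw] := @induced_lemma alpha n IH G HGloop Hnocyc H ltac:(by rewrite hH; lia) ((@card_lt_n n H v vH)).
set W := Nout G w :\: H.
have hW : #|W| + #|Nout G w :&: H| = r0 by rewrite addnC cardsID; apply: Hdeg.
have wcase : G v w \/ exists y, [/\ G u y, G v y & G y w].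
  move: wH; rewrite inE => /orP[h|h]; first by left; rewrite inE in h.
  by right; apply: Z2.
set U := [set v] :|: X :|: Nin G v :|: (Nin G u :\: Nin G v) :|: Z :|: W.
have hU : #|U| <= n by apply: leq_trans (max_card _) _; rewrite card_ord.
have eU : #|U| = 1 + r0 + indeg G v + qarc G u v + #|Z| + #|W|.
  rewrite /U cardU_disj; last first.
    move=> x; rewrite inE => /andP[xH hx].
    move: xH; rewrite inE negb_or => /andP[xX xZ]; rewrite inE in hx.
    rewrite !inE !negb_or (negbTE xZ) andbT.
    repeat (apply/andP; split).
    - apply/eqP => e; subst x; case: wcase => [h|[y [_ h1 h2]]]; [exact: n2 _ _ h hx| exact: n3 _ _ _ h1 h2 hx].
    - by rewrite inE in xX.
    - apply/negP => hv; case: wcase => [h|[y [_ h1 h2]]]; [exact: n3 _ _ _ h hx hv| exact: n4 _ _ _ _ h1 h2 hx hv].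
    - apply/negP => /andP[_ hu]; case: wcase => [h|[y [h1 _ h2]]]; [exact: n4 _ _ _ _ huv h hx hu| exact: n4 _ _ _ _ h1 h2 hx hu].
  rewrite cardU_disj; last first.
    move=> x xZ; have xX := Z1 _ xZ; have [y [h1 h2 h3]] := Z2 _ xZ.
    rewrite !inE !negb_or; rewrite inE in xX; rewrite xX andbT.
    repeat (apply/andP; split).
    - apply/eqP => e; subst x; exact: n2 _ _ h2 h3.
    - apply/negP => hv; exact: n3 _ _ _ h2 h3 hv.
    - apply/negP => /andP[_ hu]; exact: n3 _ _ _ h1 h3 hu.
  rewrite cardU_disj; last first.
    move=> x; rewrite !inE => /andP[xv xu].
    rewrite !negb_or xv andbT.
    repeat (apply/andP; split).
    - apply/eqP => e; subst x; exact: n2 _ _ huv xu.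
    - apply/negP => h; exact: n3 _ _ _ h xu huv.
  rewrite cardU_disj; last first.
    move=> x; rewrite !inE => xv; rewrite negb_or.
    repeat (apply/andP; split).
    - apply/eqP => e; subst x; by rewrite HGloop in xv.
    - apply/negP => h; exact: n2 _ _ h xv.
  rewrite cardU_disj; last first.
    move=> x; rewrite !inE => xv; apply/eqP => e; subst x; by rewrite HGloop in xv.
  by rewrite cards1 hX.
rewrite eU in hU.
move/leP in hU; apply le_INR in hU; rewrite !plus_INR /= in hU.
have hW' := f_equal INR hW; rewrite plus_INR in hW'.
rewrite hH plus_INR in hw.
have Z4 : ((1 - alpha) * ((1 - alpha) * INR (tarc G u v)) <= (1 - alpha) * INR #|Z|)%R.
  apply: Rmult_le_compat_l; [lra | exact: Z3].
rewrite /indeg /qarc in hU *.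
move: hU hW' hw Z4 Halpha.
set d := INR #|Nin G v|; set q := INR #|Nin G u :\: Nin G v|.
set z := INR #|Z|; set wc := INR #|W|; set k := INR #|Nout G w :&: H|.
set t := INR (tarc G u v); set rr := INR r0; set nn := INR n.
clearbody d q z wc k t rr nn.
move=> *; nra.
Qed.
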